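(* Let $m\ge3$. Then $\mathcal{H}_2$, viewed as the subgroup of $\mathcal{H}_m$ consisting of the elements that fix every point outside rays $0$ and $1$, is at least quadratically distorted in $\mathcal{H}_m$: there exist elements $\sigma_n\in\mathcal{H}_2$ ($n\in\mathbb{N}$) and constants $c,C>0$ such that the word length of $\sigma_n$ in $\mathcal{H}_2$ is at least $cn^2$ while its word length in $\mathcal{H}_m$ is at most $Cn$ (word lengths with respect to fixed finite generating sets).
   Context: Let $\mathbb{N}=\{1,2,3,\dots\}$, $\mathbb{Z}_n$ the integers modulo $n$, $R_n=\mathbb{Z}_n\times\mathbb{N}$ (ray $i$ is $\{(i,k):k\in\mathbb{N}\}$). The Houghton group $\mathcal{H}_n$ is the group of permutations $\sigma$ of $R_n$ for which there exist $N\ge0$ and integers $t_i$ with $(i,k)\sigma=(i,k+t_i)$ for all $i\in\mathbb{Z}_n$, $k\ge N$ (right actions); $\mathcal{H}_n$ is finitely generated for $n\ge2$. Identifying $R_2$ with the union of rays $0$ and $1$ of $R_m$ embeds $\mathcal{H}_2$ in $\mathcal{H}_m$. *)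

(* Defs.v *)
From mathcomp Require Import all_boot all_order all_algebra.
From Stdlib Require List.
Set Implicit Arguments. Unset Strict Implicit. Unset Printing Implicit Defensive.
Import Order.TTheory GRing.Theory Num.Theory.

(* Points of R_m: ray index in 'I_m and position k : nat.
   Positions are 0-indexed (k = 0 corresponds to the paper's k = 1). *)
Definition pt (m : nat) : Type := ('I_m * nat)%type.

Definition is_houghton (m : nat) (f : pt m -> pt m) : Prop :=
  bijective f /\
  exists (N : nat) (t : 'I_m -> int), forall (i : 'I_m) (k : nat), (N <= k)%N ->
    (f (i, k)).1 = i /\ Posz ((f (i, k)).2) = (Posz k + t i)%R.

(* Words: letters (s, b), b = true meaning the inverse of s.
   Right actions: the first letter acts first. *)
Definition letter_rel (m : nat) (a : (pt m -> pt m) * bool) (p q : pt m) : Prop :=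
  if a.2 then a.1 q = p else a.1 p = q.

Fixpoint word_rel (m : nat) (w : seq ((pt m -> pt m) * bool)) (p q : pt m) : Prop :=
  match w with
  | [::] => p = q
  | a :: w' => exists r, letter_rel a p r /\ word_rel w' r q
  end.

Definition word_over (m : nat) (S : seq (pt m -> pt m)) (w : seq ((pt m -> pt m) * bool)) : Prop :=
  forall a, List.In a w -> List.In a.1 S.

Definition represents (m : nat) (w : seq ((pt m -> pt m) * bool)) (g : pt m -> pt m) : Prop :=
  forall p q, word_rel w p q <-> g p = q.

Definition gen_set (m : nat) (S : seq (pt m -> pt m)) : Prop :=
  (forall s, List.In s S -> is_houghton s) /\
  (forall g, is_houghton g -> exists w, word_over S w /\ represents w g).

(* Embedding H_2 -> H_m: rays 0,1 of R_2 identified with rays 0,1 of R_m,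
   identity elsewhere. *)
Definition ext (m : nat) (s : pt 2 -> pt 2) (p : pt m) : pt m :=
  if (val p.1 < 2)%N then
    let q := s (inord (val p.1), p.2) in (insubd p.1 (val q.1), q.2)
  else p.

(* Main.v *)
Require Import Defs.
From mathcomp Require Import all_boot all_order all_algebra zify.
Import Order.TTheory GRing.Theory Num.Theory.

Definition z (p : pt 2) : int :=
  if val p.1 == 0%N then (- (Posz p.2 + 1))%R else Posz p.2.

Lemma pt2_cases (p : pt 2) : p = (ord0, p.2) \/ p = (@ord_max 1, p.2).
Proof.
case: p => [[[|[|i]] Hi] k] /=.
- by left; congr pair; apply: val_inj.
- by right; congr pair; apply: val_inj.
- by [].
Qed.

Lemma z0 k : z (ord0, k) = (- (Posz k + 1))%R. Proof. by []. Qed.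
Lemma z1 k : z (@ord_max 1, k) = Posz k. Proof. by []. Qed.

Lemma z_inj : injective z.
Proof.
move=> p q; case: (pt2_cases p) => ->; case: (pt2_cases q) => ->;
 rewrite ?z0 ?z1 => H; try lia; congr pair; lia.
Qed.

Definition invc (f : pt 2 -> pt 2) (W : seq (pt 2)) : nat :=
  \sum_(x <- W) \sum_(y <- W) (((z x < z y) && (z (f y) < z (f x)))%R : nat).

Lemma inv_ext f g W : f =1 g -> invc f W = invc g W.
Proof. by move=> H; apply: eq_bigr => x _; apply: eq_bigr => y _; rewrite !H. Qed.

Lemma inv_id W : invc id W = 0%N.
Proof.
rewrite /invc big1 // => x _; rewrite big1 // => y _.
by case: ltgtP.
Qed.

Lemma inv_comp f g W : injective g ->
  (invc (fun p => f (g p)) W <= invc g W + invc f (map g W))%N.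
Proof.
move=> ig; rewrite /invc big_map -big_split /=; apply: leq_sum => x _.
rewrite big_map -big_split /=; apply: leq_sum => y _.
case: (ltgtP (z x) (z y)) => //= Hxy.
case: (ltgtP (z (g x)) (z (g y))) => //= E.
- by rewrite addn0 leq_b1.
- move/z_inj/ig: E => E; subst y; by rewrite ltxx in Hxy.
Qed.

Lemma sum_count (T : Type) (P : pred T) (W : seq T) :
  \sum_(x <- W) (P x : nat) = count P W.
Proof. by elim: W => [|a W IH]; rewrite ?big_nil ?big_cons ?IH. Qed.

Lemma count_box B (V : seq (pt 2)) : uniq V ->
  (count (fun x => `|z x| <= Posz B)%R V <= B.*2.+1)%N.
Proof.
move=> uV; rewrite -size_filter.
have <- : size (map z (filter (fun x => `|z x| <= Posz B)%R V)) = size (filter (fun x => `|z x| <= Posz B)%R V) by rewrite size_map.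
have -> : B.*2.+1 = size [seq (Posz k - Posz B)%R | k <- iota 0 B.*2.+1] by rewrite size_map size_iota.
apply: uniq_leq_size.
  by rewrite (map_inj_uniq z_inj) filter_uniq.
move=> u /mapP [x]; rewrite mem_filter => /andP [Hx _] ->.
apply/mapP; exists (absz (z x + Posz B)%R).
  rewrite mem_iota add0n; lia.
lia.
Qed.

Lemma inv_region f h B W : uniq W -> injective h ->
  (forall x y, (z x < z y)%R -> (z (f y) < z (f x))%R ->
     (`|z (h x)| <= Posz B)%R /\ (`|z (h y)| <= Posz B)%R) ->
  (invc f W <= (B.*2.+1) ^ 2)%N.
Proof.
move=> uW ih H.
pose P := fun x => (`|z (h x)| <= Posz B)%R.
apply: (@leq_trans (\sum_(x <- W) \sum_(y <- W) (P x : nat) * (P y : nat))).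
  apply: leq_sum => x _; apply: leq_sum => y _.
  case E: (_ && _) => //; case/andP: E => E1 E2.
  by case: (H x y E1 E2); rewrite /P => -> ->.
have -> : \sum_(x <- W) \sum_(y <- W) (P x : nat) * (P y : nat) = (count P W) ^ 2.
  rewrite expnS expn1 -sum_count big_distrl /=; apply: eq_bigr => x _.
  by rewrite -big_distrr /= sum_count mulnC.
have -> : count P W = count (fun x => `|z x| <= Posz B)%R (map h W) by rewrite count_map.
by rewrite leq_exp2r // count_box // (map_inj_uniq ih).
Qed.

Lemma fin_max (f : nat -> nat) N : exists D, forall k, (k < N)%N -> (f k <= D)%N.
Proof.
elim: N => [|N [D HD]]; first by exists 0%N.
exists (maxn D (f N)) => k; rewrite ltnS leq_eqVlt => /orP [/eqP ->|Hk].
  exact: leq_maxr.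
by apply: leq_trans (HD k Hk) (leq_maxl _ _).
Qed.

Lemma hough_region s : is_houghton s -> exists B : nat, forall x y,
  (z x < z y)%R -> (z (s y) < z (s x))%R ->
  (`|z x| <= Posz B)%R /\ (`|z y| <= Posz B)%R.
Proof.
case=> _ [N [t H]].
have zs : forall i k, (N <= k)%N ->
    z (s (i,k)) = (z (i,k) + (if val i == 0%N then - t i else t i))%R.
  move=> i k Hk; case: (H i k Hk) => E1 E2.
  rewrite /z /= E1; case: ifP => _; rewrite ?E2; lia.
have [D0 HD0] := fin_max (fun k => absz (z (s (ord0,k)) - z (ord0,k))%R
    + absz (z (s (@ord_max 1,k)) - z (@ord_max 1,k))%R)%N N.
pose D := (D0 + absz (t ord0) + absz (t ord_max))%N.
have hD : forall p, (`|z (s p) - z p| <= Posz D)%R.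
  move=> p; case: (pt2_cases p) => ->; case: (ltnP p.2 N) => Hk.
  - have := HD0 _ Hk; rewrite /D; lia.
  - rewrite zs //=; rewrite /D; lia.
  - have := HD0 _ Hk; rewrite /D; lia.
  - rewrite zs //=; rewrite /D; lia.
exists (N + D.*2 + 1)%N => x y Hxy Hs.
have Hx := hD x; have Hy := hD y.
have Hlow : (- Posz (N + D.*2 + 1) <= z x)%R.
  rewrite leNgt; apply/negP => Hlt.
  case: (pt2_cases x) => Ex; case: (pt2_cases y) => Ey;
    rewrite Ex Ey ?z0 ?z1 in Hxy Hs Hx Hy Hlt; try lia.
  have Nx : (N <= x.2)%N by lia.
  have Ny : (N <= y.2)%N by lia.
  rewrite !zs //= ?z0 in Hs; lia.
have Hup : (z x < Posz N)%R.
  rewrite ltNge; apply/negP => Hge.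
  case: (pt2_cases x) => Ex; case: (pt2_cases y) => Ey;
    rewrite Ex Ey ?z0 ?z1 in Hxy Hs Hx Hy Hge; try lia.
  have Nx : (N <= x.2)%N by lia.
  have Ny : (N <= y.2)%N by lia.
  rewrite !zs //= ?z1 in Hs; lia.
split; lia.
Qed.

Lemma letter_bound s : is_houghton s -> exists K, forall g, cancel g s ->
  forall W, uniq W -> (invc s W <= K)%N /\ (invc g W <= K)%N.
Proof.
move=> hs; have [B HB] := hough_region _ hs.
exists ((B.*2.+1) ^ 2)%N => g gK W uW; split.
  apply: (@inv_region _ id) => // x y H1 H2; exact: HB.
apply: (@inv_region _ g) => //; first exact: can_inj gK.
move=> x y H1 H2.
have := HB (g y) (g x) H2; rewrite !gK => /(_ H1) [] ? ?; by split.
Qed.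

Lemma unif (S : seq (pt 2 -> pt 2)) : (forall s, List.In s S -> is_houghton s) ->
  exists K, forall s, List.In s S -> forall g, cancel g s ->
  forall W, uniq W -> (invc s W <= K)%N /\ (invc g W <= K)%N.
Proof.
elim: S => [|s S IH] hS; first by exists 0%N.
have [K1 H1] := letter_bound _ (hS s (or_introl erefl)).
have [K2 H2] := IH (fun s' h => hS s' (or_intror h)).
exists (maxn K1 K2) => s' [<-|Hin] g gK W uW.
  have [? ?] := H1 g gK W uW; split; apply: leq_trans (leq_maxl _ _); done.
have [? ?] := H2 s' Hin g gK W uW; split; apply: leq_trans (leq_maxr _ _); done.
Qed.

Lemma word_fun (S : seq (pt 2 -> pt 2)) K : (forall s, List.In s S -> is_houghton s) ->
  (forall s, List.In s S -> forall g, cancel g s ->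
     forall W, uniq W -> (invc s W <= K)%N /\ (invc g W <= K)%N) ->
  forall w, word_over S w -> exists G, injective G /\
    (forall p q, word_rel w p q <-> G p = q) /\
    (forall W, uniq W -> (invc G W <= size w * K)%N).
Proof.
move=> hS hK; elim=> [|[s b] w IH] hw.
  exists id; split=> //; split=> //= W _; by rewrite inv_id.
have hs : List.In s S by apply: (hw (s,b)); left.
have [G [iG [rG bG]]] := IH (fun a h => hw a (or_intror h)).
case: (hS s hs) => [[g sg gs] _].
pose L := if b then g else s.
have iL : injective L by rewrite /L; case: (b); [exact: can_inj gs | exact: can_inj sg].
have rL : forall p r, letter_rel (s,b) p r <-> L p = r.
  move=> p r; rewrite /letter_rel /L /=; case: (b); split=> [<-|<-] //.
exists (fun p => G (L p)); split; first by move=> p q /iG /iL.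
split.
  move=> p q /=; split.
    by case=> r [/rL <- /rG].
  by move=> <-; exists (L p); split; [apply/rL | apply/rG].
move=> W uW; apply: leq_trans (inv_comp G L W iL) _.
rewrite /= mulSn; apply: leq_add.
  by have [? ?] := hK s hs g gs W uW; rewrite /L; case: (b).
by apply: bG; rewrite (map_inj_uniq iL).
Qed.

Definition sig (n : nat) (p : pt 2) : pt 2 :=
  if (val p.1 == 1%N) && (p.2 < n.*2)%N then (p.1, (n.*2 - p.2.+1)%N) else p.

Lemma sig_invol n : cancel (sig n) (sig n).
Proof.
case=> i k; rewrite /sig /=; case E: ((val i == 1%N) && (k < n.*2)%N) => /=.
  case/andP: E => E1 E2; rewrite E1 /=.
  have -> : (n.*2 - k.+1 < n.*2)%N by lia.
  congr pair; lia.
by rewrite E.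
Qed.

Lemma sig_hough n : is_houghton (sig n).
Proof.
split; first by exists (sig n); apply: sig_invol.
exists n.*2, (fun _ => 0%R) => i k Hk; rewrite /sig /=.
have -> : (k < n.*2)%N = false by lia.
by rewrite andbF /= addr0.
Qed.

Lemma sum_const_seq (T : Type) (s : seq T) (k : nat) : \sum_(i <- s) k = (size s * k)%N.
Proof. by elim: s => [|a s IH]; rewrite ?big_nil ?big_cons ?IH ?mulSn. Qed.

Definition W0 n : seq (pt 2) := [seq (@ord_max 1, i) | i <- iota 0 n.*2].

Lemma W0_uniq n : uniq (W0 n).
Proof. rewrite map_inj_uniq ?iota_uniq // => a b []. by []. Qed.

Lemma sig_lower n : (n * n <= invc (sig n) (W0 n))%N.
Proof.
apply: (@leq_trans (\sum_(i <- iota 0 n) \sum_(j <- iota n n) 1)).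
  under eq_bigr do rewrite sum_const_seq size_iota muln1.
  by rewrite sum_const_seq size_iota.
rewrite /invc /W0 big_map -addnn iotaD big_cat /=.
apply: leq_trans (leq_addr _ _).
rewrite !big_seq; apply: leq_sum => i Hi.
rewrite big_map big_cat /=.
apply: leq_trans (leq_addl _ _).
rewrite !big_seq; apply: leq_sum => j Hj.
move: Hi Hj; rewrite !mem_iota => Hi Hj.
rewrite /sig /= !z1.
have -> : (i < n.*2)%N by lia.
have -> : (j < n.*2)%N by lia.
rewrite lt0b; apply/andP; split; rewrite /z /= ?ltz_nat; lia.
Qed.
Set Implicit Arguments. Unset Strict Implicit.

Definition trans m (a b : 'I_m) (p : pt m) : pt m :=
  if p.1 == a then (if p.2 == 0%N then (b, 0%N) else (a, p.2.-1))
  else if p.1 == b then (b, p.2.+1) else p.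

Lemma trans_cancel m (a b : 'I_m) : a != b -> cancel (trans a b) (trans b a).
Proof.
move=> ab [i k]; rewrite /trans /=.
case: (eqVneq i a) => [->|ia].
  case: (eqVneq k 0%N) => [->|k0] /=; first by rewrite eqxx.
  rewrite (negbTE ab) eqxx; congr pair; lia.
case: (eqVneq i b) => [->|ib] /=; first by rewrite eqxx.
by rewrite (negbTE ib) (negbTE ia).
Qed.

Lemma trans_hough m (a b : 'I_m) : a != b -> is_houghton (trans a b).
Proof.
move=> ab; split.
  exists (trans b a); [exact: trans_cancel | apply: trans_cancel; by rewrite eq_sym].
exists 1%N, (fun i => if i == a then (-1)%R else if i == b then 1%R else 0%R).
move=> i k Hk; rewrite /trans /=.
case: (eqVneq i a) => [->|ia].
  have -> : (k == 0%N) = false by lia.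
  split=> //=; lia.
case: (eqVneq i b) => [->|ib] /=; split=> //; lia.
Qed.

Lemma iter_trans m (a b : 'I_m) K i j : a != b ->
  iter K (trans a b) (i, j) =
  if i == a then (if (j < K)%N then (b, (K - j.+1)%N) else (a, (j - K)%N))
  else if i == b then (b, (j + K)%N) else (i, j).
Proof.
move=> ab; elim: K => [|K IH].
  rewrite /= ?ltn0 ?subn0 ?addn0.
  by case: (eqVneq i a) => [->|_] //; case: (eqVneq i b) => [->|_].
rewrite iterS IH; clear IH.
case: (eqVneq i a) => [_|ia].
  case: (ltnP j K) => Hj.
    rewrite /trans /= eq_sym (negbTE ab) eqxx.
    have -> : (j < K.+1)%N by lia.
    congr pair; lia.
  rewrite /trans /= eqxx.
  case: (eqVneq (j - K)%N 0%N) => E.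
    have -> : (j < K.+1)%N by lia.
    congr pair; lia.
  have -> : (j < K.+1)%N = false by lia.
  congr pair; lia.
case: (eqVneq i b) => [_|ib].
  rewrite /trans /= eq_sym (negbTE ab) eqxx; congr pair; lia.
by rewrite /trans /= (negbTE ia) (negbTE ib).
Qed.

Lemma word_rel_cat m (w1 w2 : seq ((pt m -> pt m) * bool)) p q :
  word_rel (w1 ++ w2) p q <-> exists r, word_rel w1 p r /\ word_rel w2 r q.
Proof.
elim: w1 p => [|a w1 IH] p /=.
  by split=> [H|[r [-> H]]] //; exists p.
split.
  case=> r [Ha /IH [r' [H1 H2]]]; exists r'; split=> //; by exists r.
by case=> r' [[r [Ha H1]] H2]; exists r; split=> //; apply/IH; exists r'.
Qed.

Lemma represents_cat m (w1 w2 : seq ((pt m -> pt m) * bool)) g1 g2 :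
  represents w1 g1 -> represents w2 g2 -> represents (w1 ++ w2) (fun p => g2 (g1 p)).
Proof.
move=> H1 H2 p q; rewrite word_rel_cat; split.
  by case=> r [/H1 -> /H2].
by move=> <-; exists (g1 p); split; [apply/H1 | apply/H2].
Qed.

Fixpoint rep (T : Type) (k : nat) (w : seq T) : seq T :=
  if k is k'.+1 then w ++ rep k' w else [::].

Lemma represents_rep m (w : seq ((pt m -> pt m) * bool)) g k :
  represents w g -> represents (rep k w) (iter k g).
Proof.
move=> H; elim: k => [|k IH] /=.
  by move=> p q; split.
move=> p q; rewrite -[iter k.+1 g p]/(iter k.+1 g p) iterSr.
by apply: (represents_cat H IH).
Qed.

Lemma size_rep (T : Type) k (w : seq T) : size (rep k w) = (k * size w)%N.
Proof. by elim: k => [|k IH] //=; rewrite size_cat IH mulSn. Qed.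

Lemma word_over_cat m S (w1 w2 : seq ((pt m -> pt m) * bool)) :
  word_over S w1 -> word_over S w2 -> word_over S (w1 ++ w2).
Proof. by move=> H1 H2 a Ha; case: (List.in_app_or _ _ _ Ha) => [/H1|/H2]. Qed.

Lemma word_over_rep m S (w : seq ((pt m -> pt m) * bool)) k :
  word_over S w -> word_over S (rep k w).
Proof.
move=> H; elim: k => [|k IH] /=; first by move=> a [].
exact: word_over_cat.
Qed.

Lemma pairE m (a b : 'I_m) (x y : nat) : val a = val b -> x = y -> (a, x) = (b, y).
Proof. by move=> /val_inj -> ->. Qed.

Lemma comp_ext m (r0 r1 r2 : 'I_m) n (p : pt m) :
  val r0 = 0%N -> val r1 = 1%N -> val r2 = 2%N ->
  iter n.*2 (trans r0 r1) (iter n.*2 (trans r2 r0) (iter n.*2 (trans r1 r2) p))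
  = ext (sig n) p.
Proof.
move=> h0 h1 h2.
have d01 : r0 != r1 by rewrite -val_eqE h0 h1.
have d12 : r1 != r2 by rewrite -val_eqE h1 h2.
have d20 : r2 != r0 by rewrite -val_eqE h0 h2.
have e01 := negbTE d01; have e12 := negbTE d12; have e20 := negbTE d20.
have e10 : (r1 == r0) = false by rewrite eq_sym.
have e21 : (r2 == r1) = false by rewrite eq_sym.
have e02 : (r0 == r2) = false by rewrite eq_sym.
case: p => i k.
rewrite /ext /sig /=.
case: (eqVneq i r1) => [->|i1].
  rewrite iter_trans // eqxx h1 /=.
  have I1 : val (@inord 1 1) = 1%N by apply: inordK.
  rewrite I1 eqxx /=.
  case: (ltnP k n.*2) => Hk.
    rewrite /= iter_trans // eqxx.
    have -> : (n.*2 - k.+1 < n.*2)%N by lia.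
    rewrite iter_trans // eqxx.
    have -> : (n.*2 - (n.*2 - k.+1).+1 < n.*2)%N by lia.
    apply: pairE; [rewrite val_insubd I1 /= h1; by case: ifP | lia].
  rewrite iter_trans // e10 e12 iter_trans // e10 eqxx.
  apply: pairE; [rewrite val_insubd I1 /= h1; by case: ifP | rewrite /=; lia].
case: (eqVneq i r2) => [E|i2]; first subst i.
  rewrite iter_trans // e21 eqxx iter_trans // eqxx.
  have -> : (k + n.*2 < n.*2)%N = false by lia.
  rewrite iter_trans // e20 e21 h2 /=.
  apply: pairE => //; lia.
case: (eqVneq i r0) => [E|i0]; first subst i.
  rewrite iter_trans // e01 e02 iter_trans // e02 eqxx iter_trans // eqxx.
  have -> : (k + n.*2 < n.*2)%N = false by lia.
  rewrite h0 /=.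
  have I0 : val (@inord 1 0) = 0%N by apply: inordK.
  rewrite I0 /=; apply: pairE; [rewrite val_insubd I0 h0; by case: ifP | rewrite /=; lia].
rewrite iter_trans // (negbTE i1) (negbTE i2) iter_trans // (negbTE i2) (negbTE i0).
rewrite iter_trans // (negbTE i1) (negbTE i0).
have -> : (val i < 2)%N = false.
  move: i0 i1 i2; rewrite -!val_eqE h0 h1 h2; by case: (val i) => [|[|[|]]].
by [].
Qed.
Unset Implicit Arguments. Set Strict Implicit.

Lemma represents_ext m (w : seq ((pt m -> pt m) * bool)) g g' :
  represents w g -> g =1 g' -> represents w g'.
Proof. by move=> H E p q; rewrite -E. Qed.

Theorem mainTheorem8 (m : nat) (hm : (3 <= m)%N)
  (S2 : seq (pt 2 -> pt 2)) (Sm : seq (pt m -> pt m))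
  (hS2 : gen_set S2) (hSm : gen_set Sm) :
  exists (sigma : nat -> pt 2 -> pt 2) (c C : rat),
    (0 < c)%R /\ (0 < C)%R /\
    forall n : nat, (0 < n)%N ->
      is_houghton (sigma n) /\
      (forall w, word_over S2 w -> represents w (sigma n) ->
         (c * (n%:R) ^+ 2 <= (size w)%:R)%R) /\
      (exists w, word_over Sm w /\ represents w (@ext m (sigma n)) /\
         ((size w)%:R <= C * n%:R)%R).
Proof.
have [K hK] := unif _ hS2.1.
have h0 : (0 < m)%N by lia.
have h1 : (1 < m)%N by lia.
have h2 : (2 < m)%N by lia.
pose r0 : 'I_m := Ordinal h0.
pose r1 : 'I_m := Ordinal h1.
pose r2 : 'I_m := Ordinal h2.
have d01 : r0 != r1 by [].
have d12 : r1 != r2 by [].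
have d20 : r2 != r0 by [].
have [wt [ot rt]] := hSm.2 _ (trans_hough d01).
have [wv [ov rv]] := hSm.2 _ (trans_hough d12).
have [ww [ow rw]] := hSm.2 _ (trans_hough d20).
exists sig, (K.+1%:R)^-1%R, ((2 * (size wv + size ww + size wt)).+1)%:R%R.
split; first by rewrite invr_gt0 ltr0n.
split; first by rewrite ltr0n.
move=> n n0; split; first exact: sig_hough.
split.
  move=> w ow2 rw2.
  have [G [iG [rGw bG]]] := word_fun _ _ hS2.1 hK _ ow2.
  have eqG : forall p, G p = sig n p.
    by move=> p; apply/(rGw p (sig n p))/(rw2 p (sig n p)).
  have L1 := sig_lower n.
  rewrite (@inv_ext (sig n) G (W0 n)) in L1; last by move=> p; rewrite eqG.
  have L2 := bG _ (W0_uniq n).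
  rewrite ler_pdivrMl ?ltr0n // -natrX -natrM ler_nat.
  nia.
exists (rep n.*2 wv ++ (rep n.*2 ww ++ rep n.*2 wt)).
split.
  by apply: word_over_cat; [|apply: word_over_cat]; apply: word_over_rep.
split.
  apply: (represents_ext _ _ _ _ (represents_cat (represents_rep _ rv)
            (represents_cat (represents_rep _ rw) (represents_rep _ rt)))).
  by move=> p /=; apply: comp_ext.
rewrite !size_cat !size_rep -natrM ler_nat.
nia.
Qed.
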